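(* Let $m\ge 1$ be odd and let $p$ be defined by $2p=3m+1$. Starting from the configuration with $m+1$ chips of one color, $m$ chips of each of the other two colors, no jokers and no dominoes, there is a sequence of Rule 1 exchanges only which produces $p-1$ dominoes.
   Context: Game model: a configuration is a tuple $(a,b,c,x,d)$ of nonnegative integers: $a,b,c$ colored chips of three colors, $x$ jokers, $d$ dominoes. Rule 1: remove three chips, consisting of some number $j\in\{0,1,2,3\}$ of jokers together with $3-j$ colored chips of pairwise distinct colors, and add one domino and one joker. *)

(* Defs.v *)
From Stdlib Require Import Arith Lia Relations.

Record config := Config {
  chipA : nat; chipB : nat; chipC : nat; jokers : nat; dominoes : nat }.

(* Rule 1: remove three chips, namely j jokers (0 <= j <= 3) together with
   3 - j colored chips of pairwise distinct colors, and add one domino and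
   one joker.  The booleans ea, eb, ec record whether a chip of color
   A, B, C respectively is removed (at most one per color = pairwise
   distinct colors); then j = 3 - (ea + eb + ec). *)
Inductive rule1 : config -> config -> Prop :=
| rule1_step (a b c x d : nat) (ea eb ec : bool) :
    Nat.b2n ea <= a -> Nat.b2n eb <= b -> Nat.b2n ec <= c ->
    3 - (Nat.b2n ea + Nat.b2n eb + Nat.b2n ec) <= x ->
    rule1 (Config a b c x d)
          (Config (a - Nat.b2n ea) (b - Nat.b2n eb) (c - Nat.b2n ec)
                  (x - (3 - (Nat.b2n ea + Nat.b2n eb + Nat.b2n ec)) + 1)
                  (d + 1)).

Definition rule1_reach : config -> config -> Prop := clos_refl_trans config rule1.

(* Main.v *)
Require Import Defs.
From Stdlib Require Import Arith Relations Lia.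

Lemma step_abc a b c x d : 1 <= a -> 1 <= b -> 1 <= c ->
  rule1 (Config a b c x d) (Config (a-1) (b-1) (c-1) (x+1) (d+1)).
Proof.
  intros. pose proof (rule1_step a b c x d true true true) as H'.
  simpl in H'. replace (x - 0 + 1) with (x+1) in H' by lia. apply H'; lia.
Qed.

Lemma step_j a b c x d : 3 <= x ->
  rule1 (Config a b c x d) (Config a b c (x-2) (d+1)).
Proof.
  intros. pose proof (rule1_step a b c x d false false false) as H'.
  simpl in H'. replace (x - 3 + 1) with (x-2) in H' by lia.
  replace (a - 0) with a in H' by lia. replace (b - 0) with b in H' by lia.
  replace (c - 0) with c in H' by lia. apply H'; lia.
Qed.

Lemma many_abc n : forall a b c x d, n <= a -> n <= b -> n <= c ->
  rule1_reach (Config a b c x d) (Config (a-n) (b-n) (c-n) (x+n) (d+n)).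
Proof.
  induction n; intros.
  - replace (a-0) with a by lia. replace (b-0) with b by lia.
    replace (c-0) with c by lia. rewrite !Nat.add_0_r. apply rt_refl.
  - eapply rt_trans. apply rt_step. apply step_abc; lia.
    replace (a - S n) with (a-1-n) by lia. replace (b - S n) with (b-1-n) by lia.
    replace (c - S n) with (c-1-n) by lia. replace (x + S n) with (x+1+n) by lia.
    replace (d + S n) with (d+1+n) by lia. apply IHn; lia.
Qed.

Lemma many_j n : forall a b c x d, 2*n+1 <= x ->
  rule1_reach (Config a b c x d) (Config a b c (x-2*n) (d+n)).
Proof.
  induction n; intros.
  - replace (x-2*0) with x by lia. rewrite Nat.add_0_r. apply rt_refl.
  - eapply rt_trans. apply rt_step. apply step_j; lia.
    replace (x - 2 * S n) with (x-2-2*n) by lia.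
    replace (d + S n) with (d+1+n) by lia. apply IHn; lia.
Qed.

Theorem mainTheorem3 (m p : nat) :
  1 <= m -> Nat.Odd m -> 2 * p = 3 * m + 1 ->
  exists cfg : config,
    rule1_reach (Config (m + 1) m m 0 0) cfg /\ dominoes cfg = p - 1.
Proof.
  intros Hm [k Hk] Hp.
  exists (Config 1 0 0 1 (m + k)). split.
  - eapply rt_trans. apply (many_abc m); lia.
    replace (Config 1 0 0 1 (m+k)) with
      (Config (m+1-m) (m-m) (m-m) (0+m-2*k) (0+m+k)).
    apply many_j; lia.
    f_equal; lia.
  - simpl. lia.
Qed.
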